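(* The generating function of $(c(n))_{n\ge0}$ is \[ \sum_{n\ge 0}c(n)x^n=\frac{1}{1-x}+\sum_{i\ge 1}\frac{x^{2^{i-1}+1}(1-x^{2^i-1})}{(1-x)(1-x^{2^{i+1}})}, \] and the generating function of $(h(n))_{n\ge 0}$ is \[ \sum_{n\ge 0}h(n)x^n=\sum_{i\ge 1}\frac{x^{2^{i-1}+1}(1-x^{2^i-1})}{(1-x)(1-x^{2^{i+1}})}. \]
   Context: For $i\in\mathbb{N}$ and $n\in\mathbb{N}_0$ let $d_i(n)=2^{i-1}-\left|(n\bmod 2^i)-2^{i-1}\right|$, and let $c(n)$ be the number of distinct values in the set $\{d_i(n): i\in\mathbb{N}\}$. For $k\ge0$ and $0\le m<2^k$ let $\beta_k(m)\in\{0,1\}^k$ be the point whose $j$-th coordinate is the binary digit of $m$ of weight $2^{k-j}$. For $n\ge2$ with $k=\lceil\log_2 n\rceil$, a pair $(n_0,n_1)$ of integers with $n=n_0+n_1$, $n_0\ge n_1\ge1$ is a hypercubic bipartition (HCBP) of $n$ if for some $i\in\{1,\dots,k\}$ the hyperplane $x_i=1/2$ splits $\beta_k(0),\dots,\beta_k(n-1)$ into $n_0$ points on one side and $n_1$ on the other. For $n\ge2$, $h(n)$ is the number of HCBPs of $n$; $h(0)=h(1)=0$. *)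

(* Defs.v *)
From HB Require Import structures.
From mathcomp Require Import all_boot all_order all_algebra.
From mathcomp Require Import finmap.
From mathcomp Require Import boolp classical_sets cardinality.
Set Implicit Arguments. Unset Strict Implicit. Unset Printing Implicit Defensive.
Import Order.TTheory GRing.Theory Num.Theory.
Local Open Scope ring_scope.

Definition dval (i n : nat) : int :=
  (2 ^ i.-1)%N%:Z - `| ((n %% 2 ^ i)%N)%:Z - ((2 ^ i.-1)%N)%:Z |.

Definition cfun (n : nat) : nat :=
  #|` fset_set (range (fun i : nat => dval i.+1 n)) |%fset.

(* j-th coordinate (1 <= j <= k) of beta_k(m): binary digit of m of weight 2^(k-j) *)
Definition beta_coord (k m j : nat) : bool := odd (m %/ 2 ^ (k - j))%N.

Definition side1 (k n j : nat) : nat := count (fun m => beta_coord k m j) (iota 0 n).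
Definition side0 (k n j : nat) : nat := count (fun m => ~~ beta_coord k m j) (iota 0 n).

(* (n0, n1) is a hypercubic bipartition of n (for n >= 2), k = ceil(log2 n) *)
Definition is_hcbp (n n0 n1 : nat) : bool :=
  let k := up_log 2 n in
  [&& (n0 + n1 == n)%N, (n1 <= n0)%N, (0 < n1)%N &
      [exists j : 'I_k,
        ((side0 k n j.+1 == n0) && (side1 k n j.+1 == n1)) ||
        ((side1 k n j.+1 == n0) && (side0 k n j.+1 == n1))]].

Definition hfun (n : nat) : nat :=
  if (n < 2)%N then 0%N
  else #|[set p : 'I_n.+1 * 'I_n.+1 | is_hcbp n p.1 p.2]|.

Definition series := nat -> int.

(* g is the power-series expansion of p/q: q * g = p coefficientwise *)
Definition series_of (p q : {poly int}) (g : series) : Prop :=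
  forall n : nat, \sum_(k < n.+1) q`_k * g (n - k)%N = p`_n.

Definition gf_num (i : nat) : {poly int} :=
  'X^(2 ^ i.-1 + 1) * (1 - 'X^(2 ^ i - 1)).
Definition gf_den (i : nat) : {poly int} :=
  (1 - 'X) * (1 - 'X^(2 ^ i.+1)).

(* Main.v *)
Require Import Defs.
From HB Require Import structures.
From mathcomp Require Import all_boot all_order all_algebra.
From mathcomp Require Import zify ring.
From mathcomp Require Import finmap boolp classical_sets cardinality.
Import Order.TTheory GRing.Theory Num.Theory.
Local Open Scope ring_scope.

Definition cand (i n : nat) : bool :=
  ((2 ^ i.-1 < n %% 2 ^ i.+1) && (n %% 2 ^ i.+1 < 3 * 2 ^ i.-1))%N.

Lemma mod_split (n P : nat) : (0 < P)%N ->
  let r := (n %% (4 * P))%N in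
  (n %% (2 * P) = if (r < 2 * P)%N then r else r - 2 * P)%N /\ (r < 4 * P)%N.
Proof.
move=> P0 r; split; last by rewrite /r ltn_mod; lia.
have -> : (n %% (2 * P) = r %% (2 * P))%N.
  by rewrite /r modn_dvdm //; apply/dvdnP; exists 2%N; lia.
have rlt : (r < 4 * P)%N by rewrite /r ltn_mod; lia.
case: ifP => h; first by rewrite modn_small.
rewrite -{1}(subnK (_ : 2 * P <= r)%N); last by lia.
rewrite modnDr modn_small //; lia.
Qed.

Lemma dval_step (i n : nat) :
  dval i.+1 n <= dval i.+2 n /\ (dval i.+1 n < dval i.+2 n) = cand i.+1 n.
Proof.
rewrite /dval /cand /=.
have P0 : (0 < 2 ^ i)%N by rewrite expn_gt0.
have [E1 E2] := mod_split n (2 ^ i) P0.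
have E4 : (2 ^ i.+2 = 4 * 2 ^ i)%N by rewrite !expnS; lia.
have E2' : (2 ^ i.+1 = 2 * 2 ^ i)%N by rewrite !expnS.
rewrite E4 E2'.
move: E1 E2; set r := (n %% (4 * 2 ^ i))%N; set P := (2 ^ i)%N => E1 E2.
rewrite E1; case: ifP => h; split; try apply/idP/idP; lia.
Qed.
Lemma odd_div (n P : nat) : (0 < P)%N -> odd (n %/ P) = (P <= n %% (2 * P))%N.
Proof.
move=> P0.
have P2 : (0 < 2 * P)%N by lia.
rewrite {1}(divn_eq n (2 * P)).
set q := (n %/ (2 * P))%N; set r := (n %% (2 * P))%N.
have rlt : (r < 2 * P)%N by rewrite /r ltn_mod.
rewrite (_ : q * (2 * P) = (q * 2) * P)%N ?mulnA // divnMDl // oddD oddM /= andbF /=.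
have := divn_eq r P; have := ltn_pmod r P0.
set x := (r %/ P)%N; set y := (r %% P)%N => ylt req.
case: x req => [|[|x]] req /=; try lia.
Qed.

Lemma modS2 (n d : nat) : (0 < d)%N ->
  ((n.+1 %% d) = if (n %% d).+1 == d then 0 else (n %% d).+1)%N.
Proof.
move=> d0; rewrite -addn1 -modnDml.
have := ltn_pmod n d0; set r := (n %% d)%N => rlt.
case: ifP => /eqP h; first by rewrite addn1 h modnn.
by rewrite modn_small addn1 //; lia.
Qed.

Definition S1 (b n : nat) : nat := count (fun m => odd (m %/ 2 ^ b)) (iota 0 n).

Lemma S1_dval (b n : nat) : n%:Z - 2 * (S1 b n)%:Z = dval b.+1 n.
Proof.
have P0 : (0 < 2 ^ b)%N by rewrite expn_gt0.
have E : (2 ^ b.+1 = 2 * 2 ^ b)%N by rewrite expnS.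
elim: n => [|n IH]; first by rewrite /S1 /dval /= mod0n; lia.
rewrite /S1 -addn1 iotaD count_cat /= -/(S1 b n) add0n addn0.
rewrite odd_div // addn1.
move: IH; rewrite /dval /= E modS2; last by lia.
move=> IH.
have rlt : (n %% (2 * 2 ^ b) < 2 * 2 ^ b)%N by rewrite ltn_pmod //; lia.
move: rlt IH.
set r := (n %% (2 * 2 ^ b))%N; set P := (2 ^ b)%N.
move=> rlt IH.
have [h|h] := eqVneq r.+1 (2 * P); case: leqP => h2; lia.
Qed.
Lemma undup_map_eq (T T1 T2 : eqType) (g : T -> T1) (h : T -> T2) (s : seq T) :
  {in s &, forall x y, (g x == g y) = (h x == h y)} ->
  size (undup (map g s)) = size (undup (map h s)).
Proof.
elim: s => [//|x s IH] H /=.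
have H' : {in s &, forall x y, (g x == g y) = (h x == h y)}.
  by move=> a b ha hb; apply: H; rewrite inE ?ha ?hb orbT.
have -> : (g x \in map g s) = (h x \in map h s).
  apply/mapP/mapP => -[y ys e]; exists y => //; apply/eqP;
    [rewrite -H ?e // | rewrite H ?e //]; by rewrite inE ?ys ?eqxx ?orbT.
by case: ifP => _ /=; rewrite IH.
Qed.

Lemma mono_le (f : nat -> int) : (forall i, f i <= f i.+1) ->
  forall i j, (i <= j)%N -> f i <= f j.
Proof.
move=> H i j /subnK <-; elim: (j - i)%N => [//|k IH].
by rewrite addSn; apply: le_trans (H _).
Qed.

Lemma undup_mono (f : nat -> int) : (forall i, f i <= f i.+1) ->
  forall L s, size (undup (map f (iota s L.+1))) =
              (count (fun i => f i < f i.+1) (iota s L)).+1.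
Proof.
move=> H; elim => [//|L IH] s.
rewrite [iota s L.+2]/= [map _ _]/= [undup _]/= [count _ _]/=.
have -> : (f s \in map f (iota s.+1 L.+1)) = (f s == f s.+1).
  apply/mapP/idP => [[j]|/eqP ->]; last by exists s.+1 => //; rewrite mem_iota leqnn /=; lia.
  rewrite mem_iota => /andP[h1 _] e.
  have := @mono_le f H _ _ h1; have := H s; rewrite -e; lia.
have := H s; rewrite le_eqVlt; case/orP => [/eqP ->|h].
  by rewrite eqxx ltxx IH.
by rewrite h lt_eqF //= IH.
Qed.
Definition dl (k c : nat) : int := if k == c then 1 else 0.

Lemma sum_delta (c n : nat) (F : nat -> int) :
  \sum_(k < n.+1) dl k c * F k = if (c <= n)%N then F c else 0.
Proof.
elim: n => [|n IH]; first by rewrite big_ord1 /dl /=; case: c => [|c] /=; rewrite ?mul1r ?mul0r.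
rewrite big_ord_recr /= IH /dl.
case: (ltngtP c n.+1) => h.
- by rewrite (_ : c <= n)%N ?(ltn_eqF h) ?mul0r ?addr0 //; lia.
- by rewrite (_ : c <= n = false)%N ?(gtn_eqF h) ?mul0r ?addr0 //; lia.
- by rewrite h ltnn mul1r add0r.
Qed.

Lemma natr_dl (k c : nat) : ((k == c)%:R : int) = dl k c.
Proof. by rewrite /dl; case: eqP. Qed.

Lemma coef_den (i k : nat) : (gf_den i)`_k =
  dl k 0 - dl k 1 - dl k (2 ^ i.+1) + dl k (2 ^ i.+1).+1.
Proof.
rewrite /gf_den mulrBr mulr1 mulrBl mul1r -exprS.
by rewrite !(coefB, coefD) coef1 coefX !coefXn !natr_dl; ring.
Qed.

Lemma coef_num (i k : nat) : (gf_num i)`_k =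
  dl k (2 ^ i.-1 + 1) - dl k (2 ^ i.-1 + 1 + (2 ^ i - 1)).
Proof.
by rewrite /gf_num mulrBr mulr1 -exprD coefB !coefXn !natr_dl.
Qed.

Lemma g_rec (i : nat) (G : series) : series_of (gf_num i) (gf_den i) G ->
  forall n, G n = dl n (2 ^ i.-1 + 1) - dl n (2 ^ i.-1 + 1 + (2 ^ i - 1))
     + (if (1 <= n)%N then G (n - 1)%N else 0)
     + (if (2 ^ i.+1 <= n)%N then G (n - 2 ^ i.+1)%N else 0)
     - (if ((2 ^ i.+1).+1 <= n)%N then G (n - (2 ^ i.+1).+1)%N else 0).
Proof.
move=> H n; have := H n; rewrite coef_num.
under eq_bigr => k _ do rewrite coef_den !(mulrDl, mulrBl) !mulNr.
rewrite !big_split /= !sumrN.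
rewrite (sum_delta 0 n (fun k => G (n - k)%N)) (sum_delta 1 n (fun k => G (n - k)%N)).
rewrite (sum_delta _ n (fun k => G (n - k)%N)) (sum_delta _ n (fun k => G (n - k)%N)).
rewrite leq0n subn0 => <-.
lia.
Qed.

Lemma boolr (b : bool) : (b%:R : int) = if b then 1 else 0.
Proof. by case: b. Qed.


Lemma cand_rec (j n : nat) :
  let i := j.+1 in let c m := ((cand i m)%:R : int) in
  c n = dl n (2 ^ i.-1 + 1) - dl n (2 ^ i.-1 + 1 + (2 ^ i - 1))
     + (if (1 <= n)%N then c (n - 1)%N else 0)
     + (if (2 ^ i.+1 <= n)%N then c (n - 2 ^ i.+1)%N else 0)
     - (if ((2 ^ i.+1).+1 <= n)%N then c (n - (2 ^ i.+1).+1)%N else 0).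
Proof.
move=> i c; rewrite /c /i /cand /=.
have P0 : (0 < 2 ^ j)%N by rewrite expn_gt0.
have e1 : (2 ^ j.+1 = 2 * 2 ^ j)%N by rewrite expnS.
have e2 : (2 ^ j.+2 = 4 * 2 ^ j)%N by rewrite !expnS; lia.
rewrite e1 e2 !boolr; set P := (2 ^ j)%N.
have N0 : (0 < 4 * P)%N by lia.
have mlt : forall m, (m %% (4 * P) < 4 * P)%N by move=> m; rewrite ltn_mod.
have msm : forall m, (m < 4 * P)%N -> (m %% (4 * P) = m)%N by move=> m h; rewrite modn_small.
have msub : forall m, (4 * P <= m)%N -> (m %% (4 * P) = (m - 4 * P) %% (4 * P))%N.
  by move=> m h; rewrite -{1}(subnK h) modnDr.
case: (ltnP n (4 * P)) => h1.
  rewrite msm //; case: n h1 => [|n] h1 /=.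
    by rewrite /dl; (repeat case: ifP => ?); lia.
  rewrite subn1 /= msm; last by lia.
  by rewrite /dl; (repeat case: ifP => ?); lia.
rewrite (msub n h1).
case: (ltnP (4 * P) n) => h2.
  rewrite (_ : 0 < n)%N; last by lia.
  rewrite (msub (n - 1)%N); last by lia.
  rewrite (_ : (n - 1 - 4 * P = n - (4 * P).+1)%N); last by lia.
  by rewrite /dl; (repeat case: ifP => ?); lia.
have -> : n = (4 * P)%N by lia.
rewrite subnn mod0n (_ : 0 < 4 * P)%N // msm; last by lia.
by rewrite /dl; (repeat case: ifP => ?); lia.
Qed.

Lemma g_val (i : nat) (G : series) : (1 <= i)%N ->
  series_of (gf_num i) (gf_den i) G -> forall n, G n = (cand i n)%:R.
Proof.
case: i => [//|j] _ H n; elim/ltn_ind: n => n IH.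
rewrite (@g_rec _ _ H n); move: (cand_rec j n) => /= ->.
congr (_ + _ + _ - _).
- by case: ifP => h //; apply: IH; lia.
- by case: ifP => h //; apply: IH; have := expn_gt0 2 j.+2; lia.
- by case: ifP => h //; apply: IH; lia.
Qed.

Lemma coef_1X (k : nat) : (1 - 'X : {poly int})`_k = dl k 0 - dl k 1.
Proof. by rewrite coefB coef1 coefX /dl; case: k => [|[|k]]. Qed.

Lemma u_one (u : series) : series_of 1 (1 - 'X) u -> forall n, u n = 1.
Proof.
move=> H; elim => [|n IH].
  by have := H 0%N; rewrite big_ord1 coef_1X /dl /= subr0 !mul1r coef1.
have := H n.+1.
under eq_bigr => k _ do rewrite coef_1X mulrBl.
rewrite sumrB (sum_delta 0 n.+1 (fun k => u (n.+1 - k)%N)) (sum_delta 1 n.+1 (fun k => u (n.+1 - k)%N)) /= coef1 /= subn0 subSS subn0 IH; lia.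
Qed.

Lemma dval_big (i n : nat) : (n <= 2 ^ i)%N -> dval i.+1 n = n%:Z.
Proof.
move=> h; rewrite /dval /= modn_small; last by rewrite expnS; have := expn_gt0 2 i; lia.
lia.
Qed.

Lemma dval_ge0 (i n : nat) : 0 <= dval i.+1 n.
Proof.
rewrite /dval /=; have := ltn_pmod n (expn_gt0 2 i.+1); rewrite expnS; lia.
Qed.

Lemma dval_le (i n : nat) : dval i.+1 n <= (2 ^ i)%N%:Z.
Proof. rewrite /dval /=; lia. Qed.

Lemma cfun_count (n : nat) :
  cfun n = (count (fun i => cand i.+1 n) (iota 0 n)).+1.
Proof.
rewrite /cfun.
set s := map (fun i => dval i.+1 n) (iota 0 n.+1).
have memE : forall x, (x \in [fset x in s]%fset) = (x \in s) by move=> x; rewrite in_fset.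
have -> : range (fun i => dval i.+1 n) = [set` [fset x in s]%fset]%classic.
  apply/seteqP; split => x /=.
    move=> [i _ <-] /=; rewrite memE; apply/mapP.
    case: (leqP i n) => h.
      by exists i => //; rewrite mem_iota.
    exists n; first by rewrite mem_iota /=.
    rewrite !dval_big //; first by have := ltn_expl n (ltnSn 1); lia.
    have := ltn_expl i (ltnSn 1); lia.
  by move=> /=; rewrite memE => /mapP [i _ ->]; exists i.
rewrite set_fsetK card_fseq.
rewrite /s (@undup_mono (fun i => dval i.+1 n)); last by move=> i; case: (dval_step i n).
congr (_.+1); apply: eq_count => i /=; by case: (dval_step i n).
Qed.

Lemma size_undup_eqi (T : eqType) (s1 s2 : seq T) :
  s1 =i s2 -> size (undup s1) = size (undup s2).
Proof.
move=> e; apply: perm_size; apply: uniq_perm; rewrite ?undup_uniq // => x.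
by rewrite !mem_undup.
Qed.

Lemma side01 (k n j : nat) : (side0 k n j + side1 k n j)%N = n.
Proof.
rewrite /side0 /side1 addnC.
by rewrite (count_predC (fun m => beta_coord k m j)) size_iota.
Qed.

Lemma side1_S1 (k n j : nat) : side1 k n j.+1 = S1 (k - j.+1) n.
Proof. by []. Qed.

Lemma up_facts (n : nat) : (2 <= n)%N ->
  let k := up_log 2 n in
  [/\ (1 <= k)%N, (k <= n)%N, (2 ^ k.-1 < n)%N & (n <= 2 ^ k)%N].
Proof.
move=> n2 k; split.
- by rewrite /k up_log_gt0; lia.
- by apply: up_log_min => //; have := ltn_expl n (ltnSn 1); lia.
- exact: up_log_gtn.
- exact: up_logP.
Qed.

Lemma side1_bounds (n k j : nat) : (2 ^ k.-1 < n)%N -> (j < k)%N ->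
  (0 < side1 k n j.+1)%N /\ (2 * side1 k n j.+1 <= n)%N.
Proof.
move=> hk hj; rewrite side1_S1.
have := S1_dval (k - j.+1) n; have := dval_ge0 (k - j.+1) n.
have := dval_le (k - j.+1) n.
have : (2 ^ (k - j.+1) <= 2 ^ k.-1)%N by rewrite leq_exp2l //; lia.
lia.
Qed.

Lemma hfun_size (n : nat) : (2 <= n)%N ->
  hfun n = size (undup (map (fun b => dval b.+1 n) (iota 0 (up_log 2 n)))).
Proof.
move=> n2; rewrite /hfun (_ : (n < 2)%N = false); last by lia.
have [k1 kn hk1 hk2] := @up_facts n n2.
set k := up_log 2 n in k1 kn hk1 hk2 *.
pose psi (j : nat) : 'I_n.+1 * 'I_n.+1 :=
  (inord (n - side1 k n j.+1), inord (side1 k n j.+1)).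
set s := map psi (iota 0 k).
have memS : forall p : 'I_n.+1 * 'I_n.+1, is_hcbp n p.1 p.2 = (p \in s).
  case=> x y /=; rewrite /is_hcbp -/k.
  apply/idP/idP.
    case/and4P => /eqP e1 h2 h3 /existsP [j].
    have [b1 b2] := @side1_bounds n k j hk1 (ltn_ord j).
    have s01 := side01 k n j.+1.
    move=> h; apply/mapP; exists (val j); first by rewrite mem_iota /=.
    rewrite /psi; apply/eqP; rewrite xpair_eqE; apply/andP; split; apply/eqP;
      apply: val_inj; rewrite /= inordK; try lia;
      by case/orP: h => /andP [/eqP a /eqP b]; lia.
  case/mapP => j; rewrite mem_iota /= add0n => jk [-> ->].
  have [b1 b2] := @side1_bounds n k j hk1 jk.
  have s01 := side01 k n j.+1.
  rewrite !inordK; try lia.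
  apply/and4P; split; [apply/eqP; lia | lia | lia | ].
  apply/existsP; exists (Ordinal jk); apply/orP; left; apply/andP; split; apply/eqP => /=; lia.
rewrite (eq_card (B := [pred p | p \in s])); last by move=> p; rewrite inE memS.
rewrite (eq_card (B := [pred p | p \in undup s])); last by move=> p; rewrite /= mem_undup.
rewrite (card_uniqP _); last exact: undup_uniq.
rewrite /s (@undup_map_eq _ _ _ psi (fun j => dval (k - j.+1).+1 n)); last first.
  move=> j j'; rewrite !mem_iota /= !add0n => hj hj'.
  have := S1_dval (k - j.+1) n; have := S1_dval (k - j'.+1) n.
  rewrite -!side1_S1.
  have [b1 b2] := @side1_bounds n k j hk1 hj; have [b1' b2'] := @side1_bounds n k j' hk1 hj'.
  move=> e e'.
  apply/eqP/eqP.
    move/(congr1 (fun p => val p.2)); rewrite /psi /= !inordK; lia.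
  move=> e2; rewrite /psi (_ : side1 k n j.+1 = side1 k n j'.+1) //; lia.
apply: size_undup_eqi => x; apply/mapP/mapP => -[j]; rewrite mem_iota /= => hj ->.
  by exists (k - j.+1)%N => //; rewrite mem_iota; lia.
exists (k - j.+1)%N; first by rewrite mem_iota; lia.
by rewrite (_ : (k - (k - j.+1).+1 = j)%N) //; lia.
Qed.

Lemma hfun_count (n : nat) : hfun n = count (fun i => cand i.+1 n) (iota 0 n).
Proof.
case: (ltnP n 2) => n2.
  rewrite /hfun n2; case: n n2 => [|[|n]] //.
have [k1 kn hk1 hk2] := @up_facts n n2.
rewrite hfun_size //; set k := up_log 2 n in k1 kn hk1 hk2 *.
rewrite -(prednK k1) (@undup_mono (fun i => dval i.+1 n)); last first.
  by move=> i; case: (dval_step i n).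
rewrite (eq_count (a2 := fun i => cand i.+1 n)); last first.
  by move=> i /=; case: (dval_step i n).
have -> : iota 0 n = iota 0 k.-1 ++ iota k.-1 (n - k.-1).
  by rewrite -iotaD subnKC //; lia.
rewrite (_ : n - k.-1 = (n - k).+1)%N; last by lia.
rewrite count_cat /= prednK //.
rewrite (_ : cand k n = true); last first.
  have := proj2 (dval_step k.-1 n); rewrite prednK // => <-.
  rewrite dval_big //.
  rewrite /dval; rewrite -(prednK k1) /= prednK //.
  case: (ltnP n (2 ^ k)) => h.
    rewrite modn_small //; lia.
  have -> : n = (2 ^ k)%N by lia.
  have e : (2 ^ k = 2 * 2 ^ k.-1)%N by rewrite -{1}(prednK k1) expnS.
  rewrite modnn e; have := expn_gt0 2 k.-1; lia.
rewrite (_ : count _ (iota k (n - k)) = 0%N); first by rewrite /= addn0 addn1.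
apply/eqP; rewrite -leqn0 leqNgt -has_count; apply/hasPn => i; rewrite mem_iota => /andP [hi _].
have := proj2 (dval_step i n) => <-.
have h1 : (n <= 2 ^ i)%N by apply: leq_trans hk2 _; rewrite leq_exp2l.
have h2 : (n <= 2 ^ i.+1)%N by apply: leq_trans h1 _; rewrite leq_exp2l.
by rewrite (@dval_big i n h1) (@dval_big i.+1 n h2) ltxx.
Qed.

Lemma sum_count (b : nat -> bool) (m : nat) :
  \sum_(1 <= i < m.+1) ((b i)%:R : int) = (count (fun i => b i.+1) (iota 0 m))%:R.
Proof.
elim: m => [|m IH]; first by rewrite big_geq.
rewrite big_nat_recr // IH -addn1 iotaD count_cat /= natrD addn0 add0n.
by rewrite addn1.
Qed.

Lemma cand_big (i n : nat) : (n < i)%N -> cand i n = false.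
Proof.
move=> h; rewrite /cand.
have h1 : (n <= 2 ^ i.-1)%N.
  have := ltn_expl i.-1 (ltnSn 1); lia.
rewrite modn_small; first by lia.
by apply: leq_ltn_trans h1 _; rewrite ltn_exp2l //; lia.
Qed.

Lemma sum_g (g : nat -> series) (n K : nat) :
  (forall i : nat, (1 <= i)%N -> series_of (gf_num i) (gf_den i) (g i)) ->
  (n.+1 <= K)%N ->
  \sum_(1 <= i < K) g i n = (count (fun i => cand i.+1 n) (iota 0 n))%:R.
Proof.
move=> Hg hK.
rewrite (eq_big_nat _ _ (F2 := fun i => ((cand i n)%:R : int))); last first.
  by move=> i /andP [h1 _]; rewrite (@g_val i (g i) h1 (Hg i h1)).
rewrite -(subnK hK); elim: (K - n.+1)%N => [|t IH]; first by rewrite add0n sum_count.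
rewrite addSn big_nat_recr /=; last by lia.
by rewrite IH cand_big ?addr0 //; lia.
Qed.

Theorem theorem15 (u : series) (g : nat -> series) :
  series_of 1 (1 - 'X) u ->
  (forall i : nat, (1 <= i)%N -> series_of (gf_num i) (gf_den i) (g i)) ->
  forall n : nat, exists K0 : nat, forall K : nat, (K0 <= K)%N ->
    (cfun n)%:Z = u n + \sum_(1 <= i < K) g i n /\
    (hfun n)%:Z = \sum_(1 <= i < K) g i n.
Proof.
move=> Hu Hg n; exists n.+1 => K hK.
rewrite (@sum_g g n K Hg hK) cfun_count hfun_count (@u_one u Hu).
by split => //; lia.
Qed.
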